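(* Let $\alpha \in \mathbb{R}_{>0}$ and let $M_\alpha = \{f(\alpha) \mid f(x) \in \mathbb{N}_0[x,x^{-1}]\}$, regarded as an additive monoid. The following statements are equivalent: (a) $1 \in \mathcal{A}(M_\alpha)$; (b) $\mathcal{A}(M_\alpha) = \{\alpha^n \mid n \in \mathbb{Z}\}$; (c) $M_\alpha$ is atomic. Moreover, suppose $\alpha \in \mathbb{R}_{>0} \setminus \{1\}$ is an algebraic number. If $M_\alpha$ is atomic, then neither of the two components in the minimal pair of $\alpha$ is a monic monomial (i.e., neither equals $x^n$ for some $n \in \mathbb{N}_0$).
   Context: $\mathbb{N}_0[x,x^{-1}]$ denotes the semiring of Laurent polynomials with coefficients in the nonnegative integers $\mathbb{N}_0$. For a (cancellative, commutative, reduced, additively written) monoid $M$, a nonzero element $a$ is an atom if $a = x+y$ with $x,y\in M$ implies $x=0$ or $y=0$; $\mathcal{A}(M)$ is the set of atoms, and $M$ is atomic if every nonzero element is a sum of atoms. For a monic polynomial $f(x) \in \mathbb{Q}[x]$, let $\ell$ be the smallest positive integer with $\ell f(x) \in \mathbb{Z}[x]$; the minimal pair of $f$ is the unique pair $(p(x),q(x))$ with $p(x),q(x) \in \mathbb{N}_0[x]$, $\ell f(x) = p(x) - q(x)$, and $p$ and $q$ having no monomials of the same degree in common. The minimal pair of a real algebraic number $\alpha$ is the minimal pair of its minimal polynomial over $\mathbb{Q}$. *)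

(* Defs.v *)
From HB Require Import structures.
From mathcomp Require Import all_boot all_order all_algebra.
From mathcomp Require Import reals.
Set Implicit Arguments. Unset Strict Implicit. Unset Printing Implicit Defensive.
Import Order.TTheory GRing.Theory Num.Theory.
Local Open Scope ring_scope.

Section Defs.
Variable R : realType.

(* Evaluation at [a] of the Laurent polynomial
   x^{-k} * (c_0 + c_1 x + ... + c_{m-1} x^{m-1})  with c_i in N_0.
   Every element of N_0[x,x^{-1}] has this form. *)
Definition laurent_eval (a : R) (k : nat) (c : seq nat) : R :=
  \sum_(i < size c) (nth 0%N c i)%:R * a ^ (i%:Z - k%:Z).

Definition inM (a : R) (x : R) : Prop :=
  exists (k : nat) (c : seq nat), x = laurent_eval a k c.

Definition isAtom (a : R) (x : R) : Prop :=
  [/\ inM a x, x <> 0 &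
      forall y z, inM a y -> inM a z -> x = y + z -> y = 0 \/ z = 0].

Definition atomic (a : R) : Prop :=
  forall x, inM a x -> x <> 0 ->
    exists s : seq R, (forall y, y \in s -> isAtom a y) /\ x = \sum_(y <- s) y.

Definition algebraic (a : R) : Prop :=
  exists f : {poly rat}, f != 0 /\ root (map_poly ratr f) a.

Definition is_minpoly (a : R) (f : {poly rat}) : Prop :=
  [/\ f \is monic, root (map_poly ratr f) a &
      forall g : {poly rat}, g != 0 -> root (map_poly ratr g) a ->
        (size f <= size g)%N].

Definition is_denom (f : {poly rat}) (l : nat) : Prop :=
  [/\ (0 < l)%N, (l%:R *: f) \is a polyOver Num.int &
      forall m : nat, (0 < m)%N -> (m%:R *: f) \is a polyOver Num.int ->
        (l <= m)%N].

(* (p, q) is the minimal pair of f: p, q in N_0[x] (integer polynomials with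
   nonnegative coefficients), l f = p - q, no common monomial degree *)
Definition is_minimal_pair (f : {poly rat}) (p q : {poly int}) : Prop :=
  exists l : nat,
    [/\ is_denom f l,
        (forall i, 0 <= p`_i) /\ (forall i, 0 <= q`_i),
        l%:R *: f = map_poly intr (p - q) &
        forall i, p`_i = 0 \/ q`_i = 0].

End Defs.

(* Main.v *)
Require Import Defs.
From HB Require Import structures.
From mathcomp Require Import all_boot all_order all_algebra.
From mathcomp Require Import reals.
From mathcomp Require Import ring.
Import Order.TTheory GRing.Theory Num.Theory.
Local Open Scope ring_scope.

Section Aux.
Variable R : realType.
Implicit Types (a x y : R) (c : seq nat).

Definition leval a (z : int) c : R :=
  \sum_(i < size c) (nth 0%N c i)%:R * a ^ (i%:Z + z).

Lemma laurent_evalE a k c : laurent_eval a k c = leval a (- k%:Z) c.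
Proof. by []. Qed.

Lemma leval_nil a z : leval a z [::] = 0.
Proof. by rewrite /leval big_ord0. Qed.

Lemma leval_cons a z n c :
  leval a z (n :: c) = n%:R * a ^ z + leval a (z + 1) c.
Proof.
rewrite /leval /= big_ord_recl /= add0r; congr (_ + _).
apply: eq_bigr => i _ /=.
have -> : ((i.+1)%:Z + z) = (i%:Z + (z + 1)) by rewrite intS; ring.
by [].
Qed.

Lemma leval_split a z c j : (0 < nth 0%N c j)%N ->
  leval a z c = a ^ (j%:Z + z) + leval a z (set_nth 0%N c j (nth 0%N c j).-1).
Proof.
elim: c z j => [|n c IH] z [|j] //= H.
- rewrite !leval_cons add0r -{1}(prednK H) mulrSr; ring.
- rewrite !leval_cons (IH _ _ H).
  have -> : ((j.+1)%:Z + z) = (j%:Z + (z + 1)) by rewrite intS; ring.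
  ring.
Qed.

Lemma leval_nz a z c : leval a z c != 0 -> exists j, (0 < nth 0%N c j)%N.
Proof.
elim: c z => [|n c IH] z; first by rewrite leval_nil eqxx.
rewrite leval_cons; case: n => [|n] H; last by exists 0%N.
rewrite mul0r add0r in H; have [j Hj] := IH _ H; by exists j.+1.
Qed.

Lemma leval_scale a z m c : a != 0 -> a ^ m * leval a z c = leval a (z + m) c.
Proof.
move=> a0; rewrite /leval mulr_sumr; apply: eq_bigr => i _.
rewrite mulrCA -expfzDr //.
have -> : m + (i%:Z + z) = i%:Z + (z + m) by ring.
by [].
Qed.

Lemma leval_pad a z m c : leval a z (nseq m 0%N ++ c) = leval a (z + m%:Z) c.
Proof.
elim: m z => [|m IH] z /=; first by rewrite addr0.
rewrite leval_cons mul0r add0r IH.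
have -> : z + 1 + m%:Z = z + (m.+1)%:Z by rewrite intS; ring.
by [].
Qed.

Lemma inM_leval a x : inM a x <-> exists z c, x = leval a z c.
Proof.
split.
- by case=> k [c ->]; exists (- k%:Z), c.
- case=> z [c ->]; case: z => m.
  + exists 0%N, (nseq m 0%N ++ c).
    by rewrite laurent_evalE oppr0 leval_pad add0r.
  + by exists m.+1, c; rewrite laurent_evalE NegzE.
Qed.

Lemma leval_pow a w : leval a w [:: 1%N] = a ^ w.
Proof. by rewrite leval_cons leval_nil mul1r addr0. Qed.

Lemma inM_pow a w : inM a (a ^ w).
Proof. by apply/inM_leval; exists w, [:: 1%N]; rewrite leval_pow. Qed.

Lemma inM_scale a x m : a != 0 -> inM a x -> inM a (a ^ m * x).
Proof.
move=> a0 /inM_leval [z [c ->]]; apply/inM_leval; exists (z + m), c.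
exact: leval_scale.
Qed.

Lemma atom_pow a x : a != 0 -> isAtom a x -> exists n : int, x = a ^ n.
Proof.
move=> a0 [/inM_leval [z [c Ex]] xn0 H].
have /leval_nz [j Hj] : leval a z c != 0 by rewrite -Ex; apply/eqP.
rewrite (leval_split _ _ _ _ Hj) in Ex.
have Mr : inM a (leval a z (set_nth 0%N c j (nth 0%N c j).-1)).
  by apply/inM_leval; do 2 eexists; reflexivity.
case: (H _ _ (inM_pow a (j%:Z + z)) Mr Ex) => [/eqP|Er].
- by rewrite (negbTE (expfz_neq0 _ a0)).
- by exists (j%:Z + z); rewrite Ex Er addr0.
Qed.

Lemma atom_scale a x m : a != 0 -> isAtom a x -> isAtom a (a ^ m * x).
Proof.
move=> a0 [Mx x0 H]; split; first exact: inM_scale.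
- by apply/eqP; rewrite mulf_eq0 negb_or expfz_neq0 //=; apply/eqP.
- move=> y z My Mz E.
  have E' : x = a ^ (-m) * y + a ^ (-m) * z.
    by rewrite -mulrDr -E mulrA -expfzDr // addNr expr0z mul1r.
  case: (H _ _ (inM_scale _ _ (-m) a0 My) (inM_scale _ _ (-m) a0 Mz) E') => /eqP;
   rewrite mulf_eq0 (negbTE (expfz_neq0 _ a0)) /= => /eqP ->; [left|right]; by [].
Qed.

Lemma atom1_pow a (n : int) : a != 0 -> isAtom a 1 -> isAtom a (a ^ n).
Proof. by move=> a0 H; rewrite -[a ^ n]mulr1; apply: atom_scale. Qed.

Lemma atom1_sum a z c : a != 0 -> isAtom a 1 ->
  exists s : seq R, (forall y, y \in s -> isAtom a y) /\ leval a z c = \sum_(y <- s) y.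
Proof.
move=> a0 H1; elim: c z => [|n c IH] z.
  by exists [::]; rewrite leval_nil big_nil.
have [s [Hs E]] := IH (z + 1).
exists (nseq n (a ^ z) ++ s); split.
- move=> y; rewrite mem_cat => /orP [/nseqP [-> _]|]; last exact: Hs.
  exact: atom1_pow.
- by rewrite leval_cons E big_cat /= big_nseq iter_addr addr0 mulr_natl.
Qed.

Lemma inM1 a : inM a 1.
Proof. by rewrite -(expr0z a); apply: inM_pow. Qed.

Lemma part1 a : 0 < a ->
  (isAtom a 1 <-> (forall x, isAtom a x <-> exists n : int, x = a ^ n))
  /\ ((forall x, isAtom a x <-> exists n : int, x = a ^ n) <-> atomic a).
Proof.
move=> apos; have a0 : a != 0 by rewrite gt_eqF.
have A1 : isAtom a 1 -> (forall x, isAtom a x <-> exists n : int, x = a ^ n).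
  move=> H x; split; first exact: atom_pow.
  by case=> n ->; apply: atom1_pow.
have A2 : (forall x, isAtom a x <-> exists n : int, x = a ^ n) -> isAtom a 1.
  by move=> H; apply/H; exists 0; rewrite expr0z.
have A3 : isAtom a 1 -> atomic a.
  move=> H x /inM_leval [z [c ->]] _; exact: atom1_sum.
have A4 : atomic a -> isAtom a 1.
  move=> H; have n10 : (1 : R) <> 0 by apply/eqP; exact: oner_neq0.
  have [s [Hs E]] := H 1 (inM1 a) n10.
  case: s Hs E => [|y s] Hs E; first by move: E; rewrite big_nil => /eqP; rewrite oner_eq0.
  have [n En] := atom_pow _ _ a0 (Hs y (mem_head _ _)).
  have := atom_scale _ _ (- n) a0 (Hs y (mem_head _ _)).
  by rewrite En -expfzDr // addNr expr0z.
split; split; auto.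
Qed.

Lemma pow_eq1 a (z : int) : 0 < a -> a != 1 -> a ^ z = 1 -> z = 0.
Proof.
move=> apos a1.
have a0 : a != 0 by rewrite gt_eqF.
have Hn : forall m : nat, a ^ (m%:Z) = 1 -> m = 0%N.
  move=> [|m] // /eqP; rewrite -exprnP pexpr_eq1 ?ltW //.
  by rewrite (negbTE a1).
case: z => m; first by move/Hn => ->.
move=> E; have : a ^ (- Negz m) = 1.
  by rewrite -[LHS]mulr1 -[X in _ * X]E -expfzDr // addNr expr0z.
by rewrite NegzE opprK => /Hn.
Qed.

Lemma keyA a c z : 0 < a -> a != 1 -> isAtom a 1 -> leval a z c = 1 ->
  forall j, (0 < nth 0%N c j)%N -> j%:Z + z = 0.
Proof.
move=> apos a1 [_ _ H] E j Hj.
have a0 : a != 0 by rewrite gt_eqF.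
rewrite (leval_split _ _ _ _ Hj) in E.
have Mr : inM a (leval a z (set_nth 0%N c j (nth 0%N c j).-1)).
  by apply/inM_leval; do 2 eexists; reflexivity.
case: (H _ _ (inM_pow a (j%:Z + z)) Mr (esym E)) => [/eqP|Er].
- by rewrite (negbTE (expfz_neq0 _ a0)).
- by apply: (@pow_eq1 _ _ apos a1); rewrite -E Er addr0.
Qed.

Lemma lemA a (q : {poly int}) (n : nat) : 0 < a -> a != 1 -> isAtom a 1 ->
  (forall i, 0 <= q`_i) -> q`_n = 0 ->
  (map_poly (intr : int -> R) q).[a] = a ^+ n -> False.
Proof.
move=> apos a1 H1 qpos qn E.
have a0 : a != 0 by rewrite gt_eqF.
set c := [seq `|z|%N | z <- (q : seq int)].
have E0 : leval a 0 c = (map_poly (intr : int -> R) q).[a].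
  rewrite (horner_coef_wide _ (eq_leq (size_map_inj_poly (@intr_inj R) (mulr0z 1) q))) /leval size_map.
  apply: eq_bigr => i _; rewrite coef_map /= (nth_map 0) //.
  idtac.
  by rewrite natr_absz ger0_norm ?qpos // addr0 exprnP.
have E1 : leval a (- n%:Z) c = 1.
  rewrite -[- n%:Z]add0r -leval_scale // E0 E exprnP -expfzDr //.
  by rewrite addNr expr0z.
have /leval_nz [j Hj] : leval a (- n%:Z) c != 0 by rewrite E1 oner_neq0.
have := @keyA _ _ _ apos a1 H1 E1 _ Hj.
move/eqP; rewrite subr_eq0 eqz_nat => /eqP Ej; subst j.
have Hs : (n < size c)%N.
  by rewrite ltnNge; apply/negP => Hs; rewrite nth_default in Hj.
move: Hj; rewrite (nth_map 0) -?(size_map (fun z : int => `|z|%N)) //.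
by rewrite qn.
Qed.

End Aux.

Theorem theorem3p1 (R : realType) :
  (forall alpha : R, 0 < alpha ->
     (isAtom alpha 1 <-> (forall x, isAtom alpha x <-> exists n : int, x = alpha ^ n))
     /\ ((forall x, isAtom alpha x <-> exists n : int, x = alpha ^ n) <-> atomic alpha))
  /\
  (forall alpha : R, 0 < alpha -> alpha != 1 -> algebraic alpha ->
     atomic alpha ->
     forall (f : {poly rat}) (p q : {poly int}),
       is_minpoly alpha f -> is_minimal_pair f p q ->
       forall n : nat, p != 'X^n /\ q != 'X^n).
Proof.
split; first exact: part1.
move=> a apos a1 _ Hat f p q [_ Hroot _] [l [_ [Hp Hq] Hlf Hdisj]] n.
have H1 : isAtom a 1.
  by have [[_ A] [_ B]] := @part1 _ _ apos; apply/A/B.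
have Heq : (map_poly (intr : int -> R) p).[a] = (map_poly (intr : int -> R) q).[a].
  have : (map_poly ratr (l%:R *: f)).[a] = 0 :> R.
    by rewrite map_polyZ hornerZ (rootP Hroot) mulr0.
  rewrite Hlf -map_poly_comp.
  rewrite (eq_map_poly (fun z => ratr_int R z)).
  rewrite rmorphB hornerD hornerN => /eqP; rewrite subr_eq0 => /eqP.
  by [].
split; apply/eqP => E.
- have qn : q`_n = 0.
    by case: (Hdisj n) => //; rewrite E coefXn eqxx.
  apply: (@lemA _ _ _ _ apos a1 H1 Hq qn).
  by rewrite -Heq E map_polyXn hornerXn.
- have pn : p`_n = 0.
    by case: (Hdisj n) => //; rewrite E coefXn eqxx.
  apply: (@lemA _ _ _ _ apos a1 H1 Hp pn).
  by rewrite Heq E map_polyXn hornerXn.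
Qed.
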